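(* Suppose Assumptions 1, 2 and 3 hold and $\delta_{2r}=c_0/\sqrt r$ for a sufficiently small constant $c_0$. Let $U^{(\lambda)}$ be a point satisfying the first- and second-order necessary conditions for a local minimum of $f^{(\lambda)}$. Then on the event $\mathcal{E}_{\mathsf{Good}}$, \[ \frac{1}{\sqrt{dr}}\|U^{(\lambda)}U^{(\lambda)\top}-M\|_F\le C\sigma \] for a constant $C$ depending on the assumptions. In particular, $\|U^{(\lambda)}U^{(\lambda)\top}-M\|_F<\lambda/(2\delta_{2r})$.
   Context: Setting. Let $d,n,r$ be positive integers and $\sigma>0$. $\mathsf{GOE}(d)$ denotes the law of a symmetric $d\times d$ matrix whose diagonal entries are i.i.d. $N(0,1)$ and whose entries above the diagonal are i.i.d. $N(0,1/2)$, independent of the diagonal. One observes $(y_i,X_i)$, $i=1,\dots,n$, with $y_i=n^{-1/2}\langle X_i,M\rangle+\varepsilon_i$, where $\langle\cdot,\cdot\rangle$ is the Frobenius inner product, $X_i\sim\mathsf{GOE}(d)$, $\varepsilon_i\sim N(0,\sigma^2)$, all mutually independent, and $M$ is a symmetric positive semidefinite matrix of rank $r$. Define $\mathcal{X}(A)_i=n^{-1/2}\langle X_i,A\rangle$. For $U\in\mathbb{R}^{d\times r}$, $f^{(\lambda)}(U)=\frac14\sum_{i=1}^n(y_i-n^{-1/2}\langle X_i,UU^\top\rangle)^2+\frac{\lambda}{2}\|U\|_F^2$. Assumption 1: $M=\sqrt d\,V\Lambda V^\top$ with $V\in\mathbb{R}^{d\times r}$ having orthonormal columns and $\Lambda$ an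 $r\times r$ positive diagonal matrix whose smallest entry $\lambda_r$ satisfies $C_1\sqrt r<\lambda_r/\sigma<C_2\sqrt r$ for sufficiently large constants $C_1,C_2$; moreover $\|M\|/(\lambda_r\sqrt d)\le\kappa$ with $\kappa=O(1)$, and $\sigma\ge\sigma_{\min}>c>0$. Assumption 2: $\gamma_n:=n/(dr)$ satisfies $\gamma_n\ge C_3 r$ for a sufficiently large constant $C_3$. Assumption 3: $C_4\sqrt d\le\lambda/\sigma\le C_5\sqrt d$ for constants $C_4,C_5$. For a fixed constant $\delta_{2r}>0$, $\mathcal{E}_{\mathsf{Good}}$ is the intersection of the events: (i) $\|\frac1n\sum_i\varepsilon_iX_i\|\le 8\sigma\sqrt{d/n}$ (spectral norm); (ii) $(1-\delta_{2r})\|A\|_F^2\le\|\mathcal{X}(A)\|^2\le(1+\delta_{2r})\|A\|_F^2$ for all symmetric $A$ of rank at most $2r$; (iii) $|\frac1n\sum_i\varepsilon_i\langle X_i,A\rangle|\le C\sigma\sqrt{dr/n}\,\|A\|_F$ for all symmetric $A$ of rank at most $2r$. *)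

(* Defs.v *)
From HB Require Import structures.
From mathcomp Require Import all_boot all_order all_algebra.
From mathcomp Require Import all_classical all_reals all_analysis.
Set Implicit Arguments. Unset Strict Implicit. Unset Printing Implicit Defensive.
Import Order.TTheory GRing.Theory Num.Theory.
Local Open Scope ring_scope.

Section Defs.
Variable R : realType.

Definition frob {m k : nat} (A B : 'M[R]_(m, k)) : R :=
  \sum_(i < m) \sum_(j < k) A i j * B i j.

Definition frobn {m k : nat} (A : 'M[R]_(m, k)) : R := Num.sqrt (frob A A).

Definition vnorm {m : nat} (x : 'cV[R]_m) : R := Num.sqrt (\sum_(i < m) x i 0 ^+ 2).

Definition opnorm_le {m : nat} (A : 'M[R]_m) (b : R) : Prop :=
  forall x : 'cV[R]_m, vnorm (A *m x) <= b * vnorm x.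

Definition mx_symmetric {m : nat} (A : 'M[R]_m) : Prop := A^T = A.

Definition mx_psd {m : nat} (A : 'M[R]_m) : Prop :=
  forall x : 'cV[R]_m, 0 <= (x^T *m A *m x) 0 0.

Definition sens {n d : nat} (X : 'I_n -> 'M[R]_d) (A : 'M[R]_d) (i : 'I_n) : R :=
  (Num.sqrt (n%:R))^-1 * frob (X i) A.

Definition obs {n d : nat} (X : 'I_n -> 'M[R]_d) (eps : 'I_n -> R) (M : 'M[R]_d)
  (i : 'I_n) : R := sens X M i + eps i.

Definition floss {n d r : nat} (X : 'I_n -> 'M[R]_d) (y : 'I_n -> R) (lam : R)
  (U : 'M[R]_(d, r)) : R :=
  4^-1 * \sum_(i < n) (y i - sens X (U *m U^T) i) ^+ 2 + lam / 2 * frobn U ^+ 2.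

(* first- and second-order necessary conditions for a local minimum of f at U,
   expressed through the directional derivatives along every direction V
   (f is a polynomial, hence smooth): gradient = 0 and Hessian PSD *)
Definition second_order_critical {d r : nat} (f : 'M[R]_(d, r) -> R)
  (U : 'M[R]_(d, r)) : Prop :=
  forall V : 'M[R]_(d, r),
    derive1 (fun t : R => f (U + t *: V)) 0 = 0 /\
    0 <= derive1 (derive1 (fun t : R => f (U + t *: V))) 0.

Definition event_good {n d : nat} (r : nat) (X : 'I_n -> 'M[R]_d) (eps : 'I_n -> R)
  (sigma delta Cev : R) : Prop :=
  opnorm_le (n%:R^-1 *: \sum_(i < n) eps i *: X i)
            (8 * sigma * Num.sqrt (d%:R / n%:R)) /\
  (forall A : 'M[R]_d, mx_symmetric A -> (\rank A <= 2 * r)%N ->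
     (1 - delta) * frobn A ^+ 2 <= \sum_(i < n) sens X A i ^+ 2 /\
     \sum_(i < n) sens X A i ^+ 2 <= (1 + delta) * frobn A ^+ 2) /\
  (forall A : 'M[R]_d, mx_symmetric A -> (\rank A <= 2 * r)%N ->
     `| n%:R^-1 * \sum_(i < n) eps i * frob (X i) A |
       <= Cev * sigma * Num.sqrt ((d * r)%:R / n%:R) * frobn A).

End Defs.

(* Main.v *)
Require Import Defs.
From HB Require Import structures.
From mathcomp Require Import all_boot all_order all_algebra.
From mathcomp Require Import all_classical all_reals all_analysis.
From mathcomp Require Import ring lra.
Import Order.TTheory GRing.Theory Num.Theory.
Local Open Scope ring_scope.

Set Implicit Arguments. Unset Strict Implicit. Unset Printing Implicit Defensive.


Section S.
Variable R : realType.

Lemma frob_tr m k (A B : 'M[R]_(m, k)) : frob A B = \tr (A *m B^T).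
Proof.
rewrite /frob /mxtrace; apply: eq_bigr => i _; rewrite !mxE.
by apply: eq_bigr => j _; rewrite !mxE.
Qed.

Lemma frobC m k (A B : 'M[R]_(m, k)) : frob A B = frob B A.
Proof. by rewrite /frob; apply: eq_bigr => i _; apply: eq_bigr => j _; rewrite mulrC. Qed.

Lemma frobDr m k (A B C : 'M[R]_(m, k)) : frob A (B + C) = frob A B + frob A C.
Proof. rewrite /frob -big_split; apply: eq_bigr => i _; rewrite -big_split; apply: eq_bigr => j _; by rewrite mxE mulrDr. Qed.

Lemma frobZr m k a (A B : 'M[R]_(m, k)) : frob A (a *: B) = a * frob A B.
Proof. rewrite /frob mulr_sumr; apply: eq_bigr => i _; rewrite mulr_sumr; apply: eq_bigr => j _; by rewrite mxE mulrCA. Qed.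

Lemma frobNr m k (A B : 'M[R]_(m, k)) : frob A (- B) = - frob A B.
Proof. by rewrite -scaleN1r frobZr mulN1r. Qed.

Lemma frobBr m k (A B C : 'M[R]_(m, k)) : frob A (B - C) = frob A B - frob A C.
Proof. by rewrite frobDr frobNr. Qed.

Lemma frobDl m k (A B C : 'M[R]_(m, k)) : frob (B + C) A = frob B A + frob C A.
Proof. by rewrite frobC frobDr !(frobC A). Qed.
Lemma frobZl m k a (A B : 'M[R]_(m, k)) : frob (a *: B) A = a * frob B A.
Proof. by rewrite frobC frobZr frobC. Qed.
Lemma frobBl m k (A B C : 'M[R]_(m, k)) : frob (B - C) A = frob B A - frob C A.
Proof. by rewrite frobC frobBr !(frobC A). Qed.

Lemma frob_ge0 m k (A : 'M[R]_(m, k)) : 0 <= frob A A.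
Proof. by apply: sumr_ge0 => i _; apply: sumr_ge0 => j _; rewrite -expr2 sqr_ge0. Qed.

Lemma frobn_sq m k (A : 'M[R]_(m, k)) : frobn A ^+ 2 = frob A A.
Proof. by rewrite /frobn sqr_sqrtr // frob_ge0. Qed.

Lemma frobn_ge0 m k (A : 'M[R]_(m, k)) : 0 <= frobn A.
Proof. exact: sqrtr_ge0. Qed.

Lemma frob_eq0 m k (A : 'M[R]_(m, k)) : frob A A = 0 -> A = 0.
Proof.
move=> /eqP; rewrite psumr_eq0; last by move=> i _; apply: sumr_ge0 => j _; rewrite -expr2 sqr_ge0.
move=> /allP H; apply/matrixP => i j; rewrite mxE.
have := H i (mem_index_enum _) => /=; rewrite psumr_eq0; last by move=> l _; rewrite -expr2 sqr_ge0.
move=> /allP /(_ j (mem_index_enum _)) /=; by rewrite mulf_eq0 orbb => /eqP.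
Qed.

Lemma frob_CS m k (A B : 'M[R]_(m, k)) : frob A B ^+ 2 <= frob A A * frob B B.
Proof.
have [B0|] := eqVneq (frob B B) 0.
  have H0 : frob A (0 : 'M[R]_(m, k)) = 0 by rewrite -(scale0r A) frobZr mul0r.
  by rewrite B0 (frob_eq0 B0) H0 expr0n mulr0.
move=> Bn0; have Bp : 0 < frob B B by rewrite lt_def Bn0 frob_ge0.
have := frob_ge0 (frob B B *: A - frob A B *: B).
rewrite frobBl !frobBr !frobZl !frobZr (frobC B A).
move=> H; have : 0 <= frob B B * (frob A A * frob B B - frob A B ^+ 2) by lra.
by rewrite pmulr_rge0 // subr_ge0.
Qed.

Lemma frob_CSn m k (A B : 'M[R]_(m, k)) : `|frob A B| <= frobn A * frobn B.
Proof.
rewrite -(@ler_pXn2r _ 2) ?nnegrE ?mulr_ge0 ?frobn_ge0 //.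
by rewrite real_normK ?num_real // exprMn !frobn_sq frob_CS.
Qed.

End S.


Section S2.
Variable R : realType.

Lemma gram_unit k d (B : 'M[R]_(k, d)) : row_free B -> (B *m B^T) \in unitmx.
Proof.
move=> fB; rewrite -row_free_unit; apply: inj_row_free => v Hv.
have : frob (v *m B) (v *m B) = 0.
  by rewrite frob_tr trmx_mul mulmxA -(mulmxA v) Hv mul0mx mxtrace0.
move/frob_eq0 => /eqP; rewrite mulmx_free_eq0 //; by move/eqP.
Qed.

Lemma tr_rank d (Z : 'M[R]_d) : `|\tr Z| <= Num.sqrt (\rank Z)%:R * frobn Z.
Proof.
set k := \rank Z.
have [B [C [ZCB fB]]] : exists (B : 'M[R]_(k, d)) (C : 'M[R]_(d, k)), Z = C *m B /\ row_free B.
  exists (row_base Z), (Z *m pinvmx (row_base Z)); split; last exact: row_base_free.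
  by rewrite mulmxKpV // eq_row_base.
have [G [GE Gu]] : exists G, G = B *m B^T /\ G \in unitmx.
  by exists (B *m B^T); split => //; apply: gram_unit.
have [P PE] : exists P, P = B^T *m invmx G *m B by eexists.
have ZP : Z *m P = Z.
  rewrite PE {1}ZCB !mulmxA -(mulmxA C B) -GE -(mulmxA C G) mulmxV // mulmx1 -ZCB //.
have PT : P^T = P.
  by rewrite PE !trmx_mul trmxK trmx_inv GE trmx_mul trmxK mulmxA.
have PP : P *m P = P.
  rewrite PE !mulmxA -(mulmxA _ B) -GE -(mulmxA _ G) mulmxV // mulmx1 //.
have trP : \tr P = k%:R.
  rewrite PE mxtrace_mulC mulmxA -GE mulmxV // mxtrace1 //.
have -> : \tr Z = frob Z P^T by rewrite frob_tr trmxK ZP.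
apply: le_trans (frob_CSn _ _) _; rewrite mulrC; apply: ler_wpM2r; first exact: frobn_ge0.
by rewrite /frobn frob_tr trmxK PT PP trP.
Qed.

End S2.


Section S3.
Variable R : realType.

Lemma trB m n (A B : 'M[R]_(m, n)) : (A - B)^T = A^T - B^T.
Proof. by apply/matrixP => i j; rewrite !mxE. Qed.
Lemma trD m n (A B : 'M[R]_(m, n)) : (A + B)^T = A^T + B^T.
Proof. by apply/matrixP => i j; rewrite !mxE. Qed.

Lemma tr4 d r (A B C D : 'M[R]_(d, r)) :
  \tr (A *m B^T *m (C *m D^T)) = \tr ((B^T *m C) *m (D^T *m A)).
Proof.
by rewrite mulmxA mxtrace_mulC !mulmxA -(mulmxA (D^T *m A)) mxtrace_mulC !mulmxA.
Qed.

Lemma delta_entry m n (A : 'M[R]_(m, n)) i j :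
  ((delta_mx 0 i : 'rV[R]_m) *m A *m (delta_mx j 0 : 'cV[R]_n)) 0 0 = A i j.
Proof. by rewrite -rowE -colE !mxE. Qed.

Lemma tr_psd d r (D : 'M[R]_(d, r)) (N : 'M[R]_r) :
  (forall x : 'cV[R]_r, 0 <= (x^T *m N *m x) 0 0) -> 0 <= \tr (D^T *m D *m N).
Proof.
move=> HN; rewrite -mulmxA mxtrace_mulC; apply: sumr_ge0 => k _.
have := HN (D^T *m (delta_mx k 0 : 'cV[R]_d)).
by rewrite trmx_mul trmxK trmx_delta -[(D *m N *m D^T) k k]delta_entry !mulmxA.
Qed.

Lemma tr_sym_sq r (A : 'M[R]_r) : A^T = A -> 0 <= \tr (A *m A).
Proof. by move=> HA; rewrite -{2}HA -frob_tr frob_ge0. Qed.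

Lemma gjz d r (U Y : 'M[R]_(d, r)) :
  (Y^T *m U)^T = Y^T *m U ->
  (forall x : 'cV[R]_r, 0 <= (x^T *m (Y^T *m U) *m x) 0 0) ->
  frob ((U - Y) *m (U - Y)^T) ((U - Y) *m (U - Y)^T)
    <= 2 * frob (U *m U^T - Y *m Y^T) (U *m U^T - Y *m Y^T).
Proof.
move=> Nsym Npsd.
set N := Y^T *m U; set P := U^T *m U; set Q := Y^T *m Y.
have NT : U^T *m Y = N by rewrite /N -Nsym trmx_mul trmxK.
set T := P + Q - (N + N).
have TE : (U - Y)^T *m (U - Y) = T.
  rewrite /T trB mulmxBl !mulmxBr NT -/P -/Q -/N. by apply/matrixP => i j; rewrite !mxE; ring.
have H1 : frob ((U - Y) *m (U - Y)^T) ((U - Y) *m (U - Y)^T) = \tr (T *m T).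
  rewrite frob_tr trmx_mul trmxK -!mulmxA mxtrace_mulC !mulmxA TE -mulmxA TE //.
have H2 : frob (U *m U^T - Y *m Y^T) (U *m U^T - Y *m Y^T)
          = \tr (P *m P) - (\tr (N *m N) + \tr (N *m N)) + \tr (Q *m Q).
  rewrite frob_tr trB !trmx_mul !trmxK mulmxDl !mulmxDr !mulNmx !mulmxN opprK.
  rewrite !raddfD !raddfN /=.
rewrite !tr4 NT -/P -/Q -/N; ring.
rewrite H1 H2.
have PT : P^T = P by rewrite /P trmx_mul trmxK.
have QT : Q^T = Q by rewrite /Q trmx_mul trmxK.
have h3 := tr_sym_sq (A := P - Q) ltac:(by rewrite trB PT QT).
have h4 := tr_psd (U - Y) Npsd; rewrite TE -/N in h4.
 move: h3 h4; rewrite /T.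
rewrite ?(mulmxDl, mulmxDr, mulNmx, mulmxN, mulmxBl, mulmxBr).
rewrite ?(raddfD, raddfB, raddfN) /= (mxtrace_mulC Q P) (mxtrace_mulC N P) (mxtrace_mulC N Q).
lra.
Qed.

End S3.


Section S5.
Variable R : realType.
Variable r : nat.
Implicit Types (x y u v : 'cV[R]_r) (G N : 'M[R]_r).

Lemma trZ m n a (A : 'M[R]_(m, n)) : (a *: A)^T = a *: A^T.
Proof. by apply/matrixP => i j; rewrite !mxE. Qed.

Definition bil G u v := (u^T *m G *m v) 0 0.

Lemma bilDl G u1 u2 v : bil G (u1 + u2) v = bil G u1 v + bil G u2 v.
Proof. by rewrite /bil trD !mulmxDl mxE. Qed.
Lemma bilDr G u v1 v2 : bil G u (v1 + v2) = bil G u v1 + bil G u v2.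
Proof. by rewrite /bil !mulmxDr mxE. Qed.
Lemma bilZl G a u v : bil G (a *: u) v = a * bil G u v.
Proof. by rewrite /bil trZ -!scalemxAl mxE. Qed.
Lemma bilZr G a u v : bil G u (a *: v) = a * bil G u v.
Proof. by rewrite /bil -!scalemxAr mxE. Qed.
Lemma bil_delta G a b : bil G (delta_mx a 0) (delta_mx b 0) = G a b.
Proof. by rewrite /bil trmx_delta delta_entry. Qed.

Lemma tr11 (A : 'M[R]_1) : \tr A = A 0 0.
Proof. by rewrite /mxtrace big_ord1. Qed.

Lemma outer_mul x y :
  x *m x^T *m (y *m y^T) = bil 1%:M x y *: (x *m y^T).
Proof.
have h : x^T *m y = (bil 1%:M x y)%:M by rewrite /bil mulmx1 -mx11_scalar.
by rewrite -mulmxA (mulmxA x^T) h mul_scalar_mx scalemxAr.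
Qed.

Lemma tr_N_outer N x y : \tr (N *m (x *m y^T)) = bil N y x.
Proof. by rewrite mulmxA mxtrace_mulC mulmxA tr11. Qed.

Definition hh x : 'M[R]_r := 1%:M - (2 / bil 1%:M x x) *: (x *m x^T).

Lemma bil1_pos x : x != 0 -> 0 < bil 1%:M x x.
Proof.
move=> xn0; have -> : bil 1%:M x x = frob x x.
  rewrite /bil mulmx1 /frob mxE; apply: eq_bigr => i _; by rewrite big_ord1 !mxE.
rewrite lt_def frob_ge0 andbT; apply/eqP => /frob_eq0 /eqP; by rewrite (negbTE xn0).
Qed.

Lemma hh_orth x : x != 0 -> (hh x)^T *m hh x = 1%:M.
Proof.
move=> xn0; have sp := bil1_pos xn0.
have hT : (hh x)^T = hh x.
  by rewrite /hh trB trmx1 trZ trmx_mul trmxK.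
rewrite hT /hh mulmxBl !mulmxBr mul1mx mulmx1 -!scalemxAl -!scalemxAr.
rewrite (outer_mul x x) scalerA mul1mx.
set s := bil 1%:M x x; set P := x *m x^T.
apply/matrixP => i j; rewrite !mxE; field; by rewrite gt_eqF.
Qed.

Lemma tr_hh N x : \tr (N *m hh x) = \tr N - 2 / bil 1%:M x x * bil N x x.
Proof. by rewrite /hh mulmxBr mulmx1 raddfB /= -scalemxAr mxtraceZ tr_N_outer. Qed.

Lemma tr_hh2 N x y : \tr (N *m (hh x *m hh y)) = \tr N - 2 / bil 1%:M x x * bil N x x
   - 2 / bil 1%:M y y * bil N y y
   + 2 / bil 1%:M x x * (2 / bil 1%:M y y) * (bil 1%:M x y * bil N y x).
Proof.
rewrite /hh mulmxBl !mulmxBr mul1mx mulmx1 -!scalemxAl -!scalemxAr (outer_mul x y).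
rewrite !scalerA ?(mulmxDr, mulmxN, mulmxBr) ?(raddfD, raddfN, raddfB) /= -!scalemxAr !mxtraceZ !tr_N_outer.
rewrite mul1mx mulmx1 !tr_N_outer; ring.
Qed.

End S5.

Section S5b.
Variable R : realType.
Variable r : nat.

Lemma bil0 (N : 'M[R]_r) : bil N 0 0 = 0.
Proof. by rewrite /bil mulmx0 mxE. Qed.

Lemma mulmx_orth (A B : 'M[R]_r) : A^T *m A = 1%:M -> B^T *m B = 1%:M ->
  (A *m B)^T *m (A *m B) = 1%:M.
Proof. by move=> hA hB; rewrite trmx_mul mulmxA -(mulmxA B^T) hA mulmx1 hB. Qed.

Lemma orth_opt (N : 'M[R]_r) :
  (forall H : 'M[R]_r, H^T *m H = 1%:M -> \tr (N *m H) <= \tr N) ->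
  N^T = N /\ forall x : 'cV[R]_r, 0 <= bil N x x.
Proof.
move=> Hopt; split; last first.
  move=> x; have [->|xn0] := eqVneq x 0; first by rewrite bil0.
  have := Hopt _ (hh_orth xn0); rewrite tr_hh => h.
  have sp := bil1_pos xn0.
  have : 0 <= 2 / bil 1%:M x x * bil N x x by lra.
  by rewrite pmulr_rge0 // divr_gt0.
apply/matrixP => i j; rewrite mxE.
have [->//|nij] := eqVneq j i.
have key : forall t : R, t * (N j i - N i j) <= t ^+ 2 * (N i i + N j j).
  move=> t.
  pose x : 'cV[R]_r := delta_mx i 0; pose y : 'cV[R]_r := x + t *: delta_mx j 0.
  have xn0 : x != 0.
    apply/negP => /eqP /matrixP /(_ i 0); rewrite !mxE !eqxx /= => /eqP.
    by rewrite oner_eq0.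
  have yn0 : y != 0.
    apply/negP => /eqP /matrixP /(_ i 0); rewrite !mxE !eqxx /= eq_sym (negbTE nij) mulr0 addr0 => /eqP.
    by rewrite oner_eq0.
  have := Hopt _ (mulmx_orth (hh_orth xn0) (hh_orth yn0)).
  rewrite tr_hh2 /y /x.
  rewrite !(bilDl, bilDr, bilZl, bilZr, bil_delta) !mxE !eqxx (negbTE nij) eq_sym (negbTE nij) /=.
  rewrite ?mulr0 ?addr0 ?mulr1 ?divr1 ?mul1r add0r.
  set w := 1 + t * t.
  set a1 := (N i i + t * N i j + (t * N j i + t * (t * N j j))).
  set a2 := (N i i + t * N j i).
  have wp : 0 < w by rewrite /w; nra.
  have hw : w * w^-1 = 1 by rewrite mulfV // gt_eqF.
  set u := w^-1 in hw *.
  move=> h.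
  have h2 : 0 <= w * (2 * N i i + 2 * u * a1 - 4 * u * a2).
    apply: mulr_ge0; first exact: ltW.
    move: h; rewrite -/u; lra.
  have h3 : 0 <= 2 * N i i * w + 2 * a1 - 4 * a2.
    have -> : 2 * N i i * w + 2 * a1 - 4 * a2 = w * (2 * N i i + 2 * u * a1 - 4 * u * a2).
      have -> : w * (2 * N i i + 2 * u * a1 - 4 * u * a2) = 2 * N i i * w + 2 * (w * u) * a1 - 4 * (w * u) * a2 by ring.
      by rewrite hw; ring.
    exact: h2.
  move: h3; rewrite /w /a1 /a2; nra.
set a := N i i + N j j; set b := N j i - N i j.
pose c := `|a| + 1.
have cp : 0 < c by rewrite /c ltr_pwDr ?ltr01 ?normr_ge0.
have ac : a <= c - 1 by rewrite /c addrK ler_norm.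
have := key (b / c).
have e : b / c * c = b by rewrite divfK // gt_eqF.
set t := b / c in e *.
move=> k.
have h1 : 0 <= t ^+ 2 * (c - 1 - a) by apply: mulr_ge0; [exact: sqr_ge0 | lra].
have k2 : t * b = t ^+ 2 * c by rewrite -e; ring.
have h1' : 0 <= t ^+ 2 * c - t ^+ 2 - t ^+ 2 * a.
  by rewrite (_ : _ - _ - _ = t ^+ 2 * (c - 1 - a)) //; ring.
have : t ^+ 2 <= 0.
  move: k h1'; rewrite k2 -/a; lra.
rewrite expr2 => tt.
have t0 : t = 0 by nra.
have b0 : b = 0 by rewrite -e t0 mul0r.
by apply/eqP; rewrite -subr_eq0 -/b b0.
Qed.

End S5b.


Section S6.
Variable R : realType.

Lemma quart (I : finType) (a b c : I -> R) (k m p q w t : R) :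
  k * \sum_i (a i + b i * t + c i * t ^+ 2) ^+ 2 + m * (p + 2 * q * t + w * t ^+ 2) =
  (Poly [:: k * \sum_i a i ^+ 2 + m * p; k * \sum_i (2 * a i * b i) + 2 * m * q;
           k * \sum_i (b i ^+ 2 + 2 * a i * c i) + m * w; k * \sum_i (2 * b i * c i);
           k * \sum_i c i ^+ 2]).[t].
Proof.
have -> : \sum_i (a i + b i * t + c i * t ^+ 2) ^+ 2 =
   \sum_i a i ^+ 2 + (\sum_i (2 * a i * b i)) * t + (\sum_i (b i ^+ 2 + 2 * a i * c i)) * t ^+ 2
   + (\sum_i (2 * b i * c i)) * t ^+ 3 + (\sum_i c i ^+ 2) * t ^+ 4.
  rewrite !mulr_suml -!big_split /=; apply: eq_bigr => i _; ring.
rewrite horner_Poly /= mul0r add0r; ring.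
Qed.

Lemma derivs (P : {poly R}) :
  (derive1 (horner P) 0 = P`_1) /\ (derive1 (derive1 (horner P)) 0 = P`_2 *+ 2).
Proof.
by rewrite -!derivE !horner_coef0 !coef_deriv.
Qed.

Lemma sensD n d (X : 'I_n -> 'M[R]_d) A B i : sens X (A + B) i = sens X A i + sens X B i.
Proof. by rewrite /sens frobDr mulrDr. Qed.
Lemma sensZ n d (X : 'I_n -> 'M[R]_d) a A i : sens X (a *: A) i = a * sens X A i.
Proof. by rewrite /sens frobZr mulrCA. Qed.
Lemma sensN n d (X : 'I_n -> 'M[R]_d) A i : sens X (- A) i = - sens X A i.
Proof. by rewrite -scaleN1r sensZ mulN1r. Qed.
Lemma sensB n d (X : 'I_n -> 'M[R]_d) A B i : sens X (A - B) i = sens X A i - sens X B i.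
Proof. by rewrite sensD sensN. Qed.

Lemma crit_conds n d r (X : 'I_n -> 'M[R]_d) (eps : 'I_n -> R) (M : 'M[R]_d) lam
   (U V : 'M[R]_(d, r)) :
  derive1 (fun t : R => floss X (obs X eps M) lam (U + t *: V)) 0 = 0 /\
  0 <= derive1 (derive1 (fun t : R => floss X (obs X eps M) lam (U + t *: V))) 0 ->
  - (2^-1) * \sum_i (eps i - sens X (U *m U^T - M) i) * sens X (U *m V^T + V *m U^T) i
     + lam * frob U V = 0 /\
  0 <= 2^-1 * \sum_i (sens X (U *m V^T + V *m U^T) i) ^+ 2
     - \sum_i (eps i - sens X (U *m U^T - M) i) * sens X (V *m V^T) i + lam * frob V V.
Proof.
set a := fun i => eps i - sens X (U *m U^T - M) i.
set b := fun i => - sens X (U *m V^T + V *m U^T) i.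
set c := fun i => - sens X (V *m V^T) i.
have -> : (fun t : R => floss X (obs X eps M) lam (U + t *: V)) =
  horner (Poly [:: 4^-1 * \sum_i a i ^+ 2 + lam / 2 * frob U U;
                   4^-1 * \sum_i (2 * a i * b i) + 2 * (lam / 2) * frob U V;
                   4^-1 * \sum_i (b i ^+ 2 + 2 * a i * c i) + lam / 2 * frob V V;
                   4^-1 * \sum_i (2 * b i * c i);
                   4^-1 * \sum_i c i ^+ 2]).
  apply/funext => t; rewrite -quart /floss frobn_sq; congr (_ * _ + _ * _).
    apply: eq_bigr => i _; congr (_ ^+ 2).
    rewrite /obs /a /b /c trD trZ !mulmxDl !mulmxDr -!scalemxAl -!scalemxAr scalerA.
    rewrite !(sensD, sensZ, sensB, sensN); ring.
  rewrite !(frobDl, frobDr, frobZl, frobZr) (frobC V U); ring.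
have [d1 d2] := derivs (Poly [:: 4^-1 * \sum_i a i ^+ 2 + lam / 2 * frob U U;
                   4^-1 * \sum_i (2 * a i * b i) + 2 * (lam / 2) * frob U V;
                   4^-1 * \sum_i (b i ^+ 2 + 2 * a i * c i) + lam / 2 * frob V V;
                   4^-1 * \sum_i (2 * b i * c i);
                   4^-1 * \sum_i c i ^+ 2]).
rewrite d1 d2 !coef_Poly /= => -[h1 h2]; split.
  have e : \sum_i 2 * a i * b i = -2 * \sum_i (eps i - sens X (U *m U^T - M) i) * sens X (U *m V^T + V *m U^T) i.
    by rewrite mulr_sumr; apply: eq_bigr => i _; rewrite /a /b; ring.
  rewrite e in h1; set S1 := \sum_i _ * _ in h1 *.
  have -> : - (2^-1) * S1 + lam * frob U V = 4^-1 * (-2 * S1) + 2 * (lam / 2) * frob U V by field.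
  exact: h1.
have e2 : \sum_i (b i ^+ 2 + 2 * a i * c i) = \sum_i (sens X (U *m V^T + V *m U^T) i) ^+ 2
   - 2 * \sum_i (eps i - sens X (U *m U^T - M) i) * sens X (V *m V^T) i.
  by rewrite mulr_sumr -sumrB; apply: eq_bigr => i _; rewrite /a /b /c; ring.
move: h2; rewrite e2 mulr2n.
set s1 := \sum_i _ ^+ 2; set s2 := \sum_i _ * _.
have -> : 2^-1 * s1 - s2 + lam * frob V V = 4^-1 * (s1 - 2 * s2) + lam / 2 * frob V V + (4^-1 * (s1 - 2 * s2) + lam / 2 * frob V V).
  by field.
by [].
Qed.

End S6.


Section S7.
Variable R : realType.

Lemma rank_outer d r (A B : 'M[R]_(d, r)) : (\rank (A *m B^T)%R <= r)%N.
Proof. exact: leq_trans (mxrankM_maxl _ _) (rank_leq_col _). Qed.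

Lemma rank_diff d r (A B : 'M[R]_(d, r)) : (\rank (A *m A^T - B *m B^T)%R <= 2 * r)%N.
Proof.
apply: leq_trans (mxrank_add _ _) _; rewrite mxrank_opp mul2n -addnn.
by apply: leq_add; apply: rank_outer.
Qed.

Lemma noise_bound n d (X : 'I_n -> 'M[R]_d) (eps : 'I_n -> R) (A : 'M[R]_d) (K m : R) :
  (0 < n)%N -> 0 <= m ->
  `| n%:R^-1 * \sum_(i < n) eps i * frob (X i) A | <= K * Num.sqrt (m / n%:R) * frobn A ->
  `| \sum_i eps i * sens X A i | <= K * Num.sqrt m * frobn A.
Proof.
move=> n0 m0 h.
have np : 0 < n%:R :> R by rewrite ltr0n.
have sp : 0 < Num.sqrt n%:R :> R by rewrite sqrtr_gt0.
have -> : \sum_i eps i * sens X A i = Num.sqrt n%:R * (n%:R^-1 * \sum_(i < n) eps i * frob (X i) A).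
  rewrite mulrA mulr_sumr; apply: eq_bigr => i _; rewrite /sens.
  have -> : Num.sqrt n%:R * n%:R^-1 = (Num.sqrt n%:R)^-1 :> R.
    rewrite -{2}(sqr_sqrtr (ltW np)) expr2 invfM mulrA divff ?mul1r //.
    by rewrite gt_eqF.
  by rewrite mulrCA.
rewrite normrM ger0_norm ?(ltW sp) //.
apply: le_trans (ler_wpM2l (ltW sp) h) _.
have e : Num.sqrt n%:R * Num.sqrt (m / n%:R) = Num.sqrt m.
  by rewrite -sqrtrM ?ler0n // mulrCA mulfV ?mulr1 // gt_eqF.
rewrite (_ : Num.sqrt n%:R * (K * Num.sqrt (m / n%:R) * frobn A) = K * (Num.sqrt n%:R * Num.sqrt (m / n%:R)) * frobn A); last by ring.
by rewrite e.
Qed.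

End S7.

Section S7b.
Variable R : realType.

Lemma trB_mx d (A B : 'M[R]_d) : \tr (A - B) = \tr A - \tr B.
Proof. by rewrite raddfB. Qed.

Lemma core n d r (X : 'I_n -> 'M[R]_d) (eps : 'I_n -> R) (U Y : 'M[R]_(d, r))
    (lam delta K : R) :
  (Y^T *m U)^T = Y^T *m U ->
  (forall x : 'cV[R]_r, 0 <= (x^T *m (Y^T *m U) *m x) 0 0) ->
  0 <= lam -> 0 <= delta -> delta <= 10^-1 -> 0 <= K ->
  (forall A : 'M[R]_d, mx_symmetric A -> (\rank A <= 2 * r)%N ->
     (1 - delta) * frobn A ^+ 2 <= \sum_(i < n) sens X A i ^+ 2 /\
     \sum_(i < n) sens X A i ^+ 2 <= (1 + delta) * frobn A ^+ 2) ->
  (forall A : 'M[R]_d, mx_symmetric A -> (\rank A <= 2 * r)%N ->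
     `| \sum_i eps i * sens X A i | <= K * frobn A) ->
  second_order_critical (floss X (obs X eps (Y *m Y^T)) lam) U ->
  frobn (U *m U^T - Y *m Y^T) <= 16 * (K + lam * Num.sqrt r%:R).
Proof.
move=> Nsym Npsd l0 d0 d1 K0 rip noise soc.
have [h1 h2] := crit_conds (soc (U - Y)).
set E := U *m U^T - Y *m Y^T in h1 h2 *.
set Dl := U - Y in h1 h2 *.
set D := Dl *m Dl^T.
have SE : U *m Dl^T + Dl *m U^T = E + D.
  rewrite /D /E /Dl trB !mulmxBr !mulmxBl.
  move: (U *m U^T) (U *m Y^T) (Y *m U^T) (Y *m Y^T) => a b c e0.
  apply/matrixP => i j; rewrite !mxE; lra.
rewrite SE in h1 h2.
have ES : mx_symmetric E by rewrite /mx_symmetric /E trB !trmx_mul !trmxK.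
have DS : mx_symmetric D by rewrite /mx_symmetric /D !trmx_mul !trmxK.
have Er : (\rank E <= 2 * r)%N by apply: rank_diff.
have Dr : (\rank D <= 2 * r)%N.
  by apply: leq_trans (rank_outer _ _) _; rewrite leq_pmull.
set Se := \sum_i sens X E i ^+ 2; set Sd := \sum_i sens X D i ^+ 2.
set Sed := \sum_i sens X E i * sens X D i.
set We := \sum_i eps i * sens X E i; set Wd := \sum_i eps i * sens X D i.
have F1 : \sum_i (eps i - sens X E i) * sens X (E + D) i = We + Wd - Se - Sed.
  rewrite (eq_bigr (fun i => eps i * sens X E i + eps i * sens X D i - sens X E i ^+ 2 - sens X E i * sens X D i)); last first.
    by move=> i _; rewrite (sensD X E D); ring.
  by rewrite !sumrB big_split.
have F2 : \sum_i sens X (E + D) i ^+ 2 = Se + 2 * Sed + Sd.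
  rewrite (eq_bigr (fun i => sens X E i ^+ 2 + 2 * (sens X E i * sens X D i) + sens X D i ^+ 2)); last first.
    by move=> i _; rewrite (sensD X E D); ring.
  by rewrite !big_split /= -mulr_sumr.
have F3 : \sum_i (eps i - sens X E i) * sens X D i = Wd - Sed.
  rewrite (eq_bigr (fun i => eps i * sens X D i - sens X E i * sens X D i)); last first.
    by move=> i _; ring.
  by rewrite sumrB.
rewrite F1 in h1; rewrite F2 F3 in h2.
set x := frobn E.
have x0 : 0 <= x by apply: frobn_ge0.
have key : 0 <= - (3 / 2) * Se + 2^-1 * Sd + 2 * We + Wd
                 + lam * (frob Dl Dl - 4 * frob U Dl).
  rewrite mulrBr; lra.
have [ripE _] := rip E ES Er.
have [_ ripD] := rip D DS Dr.
have gj : frob D D <= 2 * frob E E by apply: gjz.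
have fD : frobn D ^+ 2 <= 2 * x ^+ 2 by rewrite /x !frobn_sq.
have fD2 : frobn D <= 2 * x.
  rewrite -(@ler_pXn2r _ 2) ?nnegrE ?frobn_ge0 ?mulr_ge0 //.
  apply: le_trans fD _; rewrite exprMn; nra.
have nE : We <= K * x by apply: le_trans (ler_norm _) (noise E ES Er).
have nD : Wd <= K * (2 * x).
  apply: le_trans (ler_norm _) _; apply: le_trans (noise D DS Dr) _.
  by apply: ler_wpM2l.
have trE : \tr E = frob U U - frob Y Y by rewrite /E trB_mx !frob_tr.
have lw : frob Dl Dl - 4 * frob U Dl <= - 2 * \tr E.
  rewrite trE /Dl !(frobBl, frobBr) (frobC Y U).
  have := frob_ge0 (U - Y); rewrite !(frobBl, frobBr) (frobC Y U); lra.
have tb : - \tr E <= 2 * Num.sqrt r%:R * x.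
  apply: (@le_trans _ _ `|\tr E|); first by rewrite -normrN ler_norm.
  apply: le_trans (tr_rank E) _; rewrite -/x; apply: ler_wpM2r => //.
  rewrite -(@ler_pXn2r _ 2) ?nnegrE ?sqrtr_ge0 ?mulr_ge0 ?sqrtr_ge0 // exprMn.
  rewrite !sqr_sqrtr ?ler0n //.
  have := Er; rewrite -(ler_nat R) natrM => h.
  have : 0 <= r%:R :> R by rewrite ler0n.
  lra.
have s1 := ler_wpM2l l0 lw.
have s2 : lam * (- 2 * \tr E) <= lam * (2 * (2 * Num.sqrt r%:R * x)).
  by apply: ler_wpM2l => //; lra.
have s3 : Sd <= (1 + delta) * (2 * x ^+ 2).
  apply: le_trans ripD _; apply: ler_wpM2l; [lra | exact: fD].
have s4 : delta * x ^+ 2 <= 10^-1 * x ^+ 2 by apply: ler_wpM2r => //; exact: sqr_ge0.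
have ripE' : (1 - delta) * x ^+ 2 <= Se by [].
set s := Num.sqrt r%:R in s2 *.
have s0 : 0 <= s by apply: sqrtr_ge0.
have fin : x ^+ 2 <= 16 * (K + lam * s) * x.
  nra.
have B0 : 0 <= K + lam * s by apply: addr_ge0 => //; apply: mulr_ge0.
have [->|xp] := eqVneq x 0; first by rewrite mulr_ge0 //.
have xp' : 0 < x by rewrite lt_def xp x0.
by rewrite expr2 ler_pM2r // in fin.
Qed.

End S7b.

Import numFieldNormedType.Exports.


Section S4.
Variable R : realType.
Local Open Scope classical_set_scope.

Lemma cont_sum (T : topologicalType) (I : finType) (F : I -> T -> R) :
  (forall i, continuous (F i)) -> continuous (fun x => \sum_i F i x).
Proof.
move=> HF x.
have -> : (fun x => \sum_i F i x) = \sum_i F i.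
  by apply/funext => y; rewrite fct_sumE.
elim/big_ind: _ => //.
- exact: cst_continuous.
- by move=> f g Hf Hg; apply: continuousD.
Qed.

Lemma coord_cont n (k : 'I_n) : continuous (fun v : 'rV[R]_n => v 0 k).
Proof. exact: coord_continuous. Qed.

Lemma cmul_cont (T : topologicalType) (c : R) (g : T -> R) :
  continuous g -> continuous (fun x => c * g x).
Proof. move=> Hg x. apply: continuousM; last exact: Hg. first [exact: (@cst_continuous T _ c x) | exact: (@cvg_cst _ _ _ _ c) | idtac "FAIL"]. Qed.

Definition orthS r : set 'rV[R]_(r * r) :=
  [set v | (vec_mx v)^T *m vec_mx v = 1%:M].
Arguments orthS : clear implicits.

Lemma orthS_closed r : closed (orthS r).
Proof.
have -> : orthS r = \bigcap_(p in [set: 'I_r * 'I_r])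
   ((fun v : 'rV[R]_(r*r) => \sum_k v 0 (mxvec_index k p.1) * v 0 (mxvec_index k p.2))
     @^-1` [set x | x = (1%:M : 'M[R]_r) p.1 p.2]).
  apply/seteqP; split => v /=.
    by move=> Hv p _ /=; rewrite -Hv mxE; apply: eq_bigr => k _; rewrite !mxE.
  move=> Hv; apply/matrixP => i j; rewrite -(Hv (i, j)) //= mxE.
  by apply: eq_bigr => k _; rewrite !mxE.
apply: closed_bigI => p _; apply: preimage_closed; last exact: closed_eq.
move=> v _; apply: cont_sum => k; move=> w; apply: continuousM; exact: coord_cont.
Qed.

Lemma orth_entry r (Q : 'M[R]_r) a b : Q^T *m Q = 1%:M -> `|Q a b| <= 1.
Proof.
move=> HQ.
have : Q a b ^+ 2 <= 1.
  have -> : 1 = (Q^T *m Q) b b by rewrite HQ mxE eqxx.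
  rewrite mxE (bigD1 a) //= mxE -expr2 lerDl.
  by apply: sumr_ge0 => k _; rewrite mxE -expr2 sqr_ge0.
by move=> h; rewrite -(@ler_pXn2r _ 2) ?nnegrE ?normr_ge0 // expr1n real_normK ?num_real.
Qed.

Lemma orthS_bounded r : bounded_set (orthS r).
Proof.
exists 1; split; first exact: num_real.
move=> M M1 v Hv; rewrite /Num.norm /= mx_normrE.
apply: bigmax_le; first by apply: ltW; apply: lt_trans M1.
move=> [i k] _ /=; apply: le_trans (ltW M1); rewrite (ord1 i).
case: (mxvec_indexP k) => a b.
by have := orth_entry a b Hv; rewrite mxE.
Qed.

Lemma align d r (U Y0 : 'M[R]_(d, r)) : exists Q : 'M[R]_r,
  Q^T *m Q = 1%:M /\ forall H : 'M[R]_r, H^T *m H = 1%:M ->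
   \tr ((Y0 *m Q)^T *m U *m H) <= \tr ((Y0 *m Q)^T *m U).
Proof.
pose f := fun v : 'rV[R]_(r * r) => frob U (Y0 *m vec_mx v).
have fc : continuous f.
  have -> : f = fun v => \sum_i \sum_j \sum_k (U i j * Y0 i k) * v 0 (mxvec_index k j).
    apply/funext => v; rewrite /f /frob; apply: eq_bigr => i _; apply: eq_bigr => j _.
    by rewrite mxE mulr_sumr; apply: eq_bigr => k _; rewrite mxE mulrA.
  apply: cont_sum => i; apply: cont_sum => j; apply: cont_sum => k.
  apply: cmul_cont; exact: coord_cont.
have A0 : orthS r !=set0 by exists (mxvec 1%:M); rewrite /orthS /= mxvecK trmx1 mulmx1.
have Ac : compact (orthS r).
  by apply: bounded_closed_compact; [exact: orthS_bounded | exact: orthS_closed].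
have fcA : {within orthS r, continuous f} by apply: continuous_subspaceT.
have [c cA cmax] := compact_EVT_max A0 Ac fcA.
exists (vec_mx c); split; first by move: cA; rewrite inE.
move=> H HH.
have HT : H *m H^T = 1%:M by apply: mulmx1C.
have := cmax (mxvec (vec_mx c *m H^T)).
rewrite /f mxvecK inE /orthS /= mxvecK.
have -> : (vec_mx c *m H^T)^T *m (vec_mx c *m H^T) = 1%:M.
  rewrite trmx_mul trmxK mulmxA -(mulmxA H) (_ : (vec_mx c)^T *m vec_mx c = 1%:M).
    by rewrite mulmx1 HT.
  by move: cA; rewrite inE.
move=> /(_ erefl); rewrite !frob_tr !trmx_mul trmxK.
rewrite mxtrace_mulC [X in _ <= X]mxtrace_mulC.
move=> h; apply: le_trans h; rewrite -!mulmxA (mxtrace_mulC H) !mulmxA.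
by rewrite lexx.
Qed.

End S4.

Unset Implicit Arguments. Set Strict Implicit.


Lemma factor (R : realType) d r (V : 'M[R]_(d, r)) (Lam : 'rV[R]_r) :
  (forall j, 0 < Lam 0 j) -> exists Y0 : 'M[R]_(d, r),
  Num.sqrt (d%:R) *: (V *m diag_mx Lam *m V^T) = Y0 *m Y0^T.
Proof.
move=> Lp.
pose Ls : 'rV[R]_r := \row_j Num.sqrt (Lam 0 j).
exists (Num.sqrt (Num.sqrt d%:R) *: (V *m diag_mx Ls)).
have DD : diag_mx Ls *m diag_mx Ls = diag_mx Lam.
  rewrite mul_mx_diag; apply/matrixP => i j; rewrite !mxE.
  case: (eqVneq i j) => [->|nij]; last by rewrite !mulr0n mul0r.
  by rewrite !mulr1n -expr2 sqr_sqrtr // ltW.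
rewrite trZ trmx_mul tr_diag_mx -scalemxAl -scalemxAr scalerA -expr2 sqr_sqrtr ?sqrtr_ge0 //.
by rewrite mulmxA -(mulmxA V (diag_mx Ls)) DD.
Qed.

Theorem lemma3 (R : realType) (kappa C4 C5 Cev smin : R) :
  0 < kappa -> 0 < C4 -> C4 <= C5 -> 0 < Cev -> 0 < smin ->
  exists C1min : R, forall C1 : R, C1min <= C1 ->
  forall C2 : R, C1 < C2 ->
  exists C3min : R, forall C3 : R, C3min <= C3 ->
  exists c0max : R, 0 < c0max /\ forall c0 : R, 0 < c0 -> c0 <= c0max ->
  exists C : R, 0 < C /\
  forall (d n r : nat) (sigma lam lamr : R)
    (V : 'M[R]_(d, r)) (Lam : 'rV[R]_r) (M : 'M[R]_d)
    (X : 'I_n -> 'M[R]_d) (eps : 'I_n -> R) (U : 'M[R]_(d, r)),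
    (0 < d)%N -> (0 < n)%N -> (0 < r)%N -> 0 < sigma ->
    (* M symmetric PSD of rank r *)
    mx_symmetric M -> mx_psd M -> \rank M = r ->
    (* Assumption 1 *)
    V^T *m V = 1%:M ->
    (forall j, 0 < Lam 0 j) ->
    M = Num.sqrt (d%:R) *: (V *m diag_mx Lam *m V^T) ->
    (exists j, Lam 0 j = lamr) -> (forall j, lamr <= Lam 0 j) ->
    C1 * Num.sqrt (r%:R) < lamr / sigma -> lamr / sigma < C2 * Num.sqrt (r%:R) ->
    opnorm_le M (kappa * lamr * Num.sqrt (d%:R)) ->
    smin <= sigma ->
    (* Assumption 2 *)
    C3 * r%:R <= n%:R / (d * r)%:R ->
    (* Assumption 3 *)
    C4 * Num.sqrt (d%:R) <= lam / sigma -> lam / sigma <= C5 * Num.sqrt (d%:R) ->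
    (* the design matrices lie in the support of GOE(d) *)
    (forall i, mx_symmetric (X i)) ->
    (* the event E_Good with delta_{2r} = c0 / sqrt r *)
    event_good r X eps sigma (c0 / Num.sqrt (r%:R)) Cev ->
    (* U is a second-order critical point of f^{(lam)} *)
    second_order_critical (floss X (obs X eps M) lam) U ->
    (Num.sqrt ((d * r)%:R))^-1 * frobn (U *m U^T - M) <= C * sigma /\
    frobn (U *m U^T - M) < lam / (2 * (c0 / Num.sqrt (r%:R))).
Proof.
move=> _ C4p C45 Cevp _.
exists 0 => C1 _ C2 _; exists 0 => C3 _.
set C := 16 * (Cev + C5).
have Cp : 0 < C by rewrite /C; apply: mulr_gt0 => //; apply: addr_gt0 => //; lra.
exists (Num.min (10^-1) (C4 / (4 * C))); split.
  by rewrite lt_min invr_gt0 ltr0n /= divr_gt0 // mulr_gt0.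
move=> c0 c0p; rewrite le_min => /andP [c01 c0C].
exists C; split => //.
move=> d n r sigma lam lamr V Lam M X eps U d0 n0 r0 sp _ _ _ _ Lpos ME _ _ _ _ _ _ _ lam1 lam2 _ ev soc.
have [Y0 HY0] := @factor R d r V Lam Lpos.
rewrite HY0 in ME.
have [Q [QQ Qopt]] := align U Y0.
set Y := Y0 *m Q in Qopt.
have MY : M = Y *m Y^T.
  by rewrite ME /Y trmx_mul mulmxA -(mulmxA Y0) (mulmx1C QQ) mulmx1.
have [Nsym Npsd] := orth_opt Qopt.
rewrite MY in soc *.
have [_ [rip noi]] := ev.
set s := Num.sqrt r%:R in rip noi *.
have s0 : 0 <= s by apply: sqrtr_ge0.
have ss : s * s = r%:R by rewrite -expr2 sqr_sqrtr ?ler0n.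
have r1 : 1 <= r%:R :> R by rewrite ler1n.
have s1 : 1 <= s by nra.
have sd0 : 0 < Num.sqrt d%:R :> R by rewrite sqrtr_gt0 ltr0n.
have dl0 : 0 <= c0 / s by apply: divr_ge0 => //; exact: ltW.
have dl1 : c0 / s <= 10^-1.
  apply: le_trans c01; rewrite ler_pdivrMr; last by lra.
  by rewrite ler_peMr //; exact: ltW.
have noise' : forall A : 'M[R]_d, mx_symmetric A -> (\rank A <= 2 * r)%N ->
     `| \sum_i eps i * sens X A i | <= Cev * sigma * Num.sqrt (d * r)%:R * frobn A.
  by move=> A HA HR; apply: noise_bound n0 (ler0n _ _) (noi A HA HR).
have l0 : 0 <= lam.
  have : 0 <= lam / sigma by apply: le_trans lam1; apply: mulr_ge0; [exact: ltW|exact: ltW].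
  by rewrite pmulr_lge0 ?invr_gt0.
have K0 : 0 <= Cev * sigma * Num.sqrt (d * r)%:R.
  by apply: mulr_ge0; [apply: mulr_ge0; exact: ltW | exact: sqrtr_ge0].
have := core Nsym Npsd l0 dl0 dl1 K0 rip noise' soc.
rewrite natrM sqrtrM ?ler0n // -/s => bnd.
rewrite ler_pdivrMr // in lam2.
rewrite ler_pdivlMr // in lam1.
set P := sigma * Num.sqrt d%:R * s.
have Pp : 0 < P by rewrite /P; apply: mulr_gt0; [apply: mulr_gt0|lra].
have bnd2 : frobn (U *m U^T - Y *m Y^T) <= C * P.
  apply: le_trans bnd _; rewrite /C /P.
  have : lam * s <= C5 * Num.sqrt d%:R * sigma * s by apply: ler_wpM2r.
  nra.
split.
  apply: le_trans (ler_wpM2l _ bnd2) _; first by rewrite invr_ge0; apply: mulr_ge0; lra.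
  rewrite le_eqVlt; apply/orP; left; apply/eqP; rewrite /P; field.
  by apply/andP; split; apply: lt0r_neq0 => //; lra.
have -> : lam / (2 * (c0 / s)) = lam * s / (2 * c0).
  by field; apply/andP; split; apply: lt0r_neq0 => //; lra.
rewrite ltr_pdivlMr; last by lra.
have A1 : frobn (U *m U^T - Y *m Y^T) * (2 * c0) <= C * P * (2 * c0).
  by apply: ler_wpM2r => //; lra.
rewrite ler_pdivlMr in c0C; last by lra.
have A2 : c0 * (4 * C) * P <= C4 * P by apply: ler_wpM2r => //; exact: ltW.
have A3 : C4 * Num.sqrt d%:R * sigma * s <= lam * s by apply: ler_wpM2r.
have A4 : 0 < C4 * P by apply: mulr_gt0.
have e1 : C4 * Num.sqrt d%:R * sigma * s = C4 * P by rewrite /P; ring.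
have e2 : C * P * (2 * c0) = c0 * (4 * C) * P / 2 by field.
lra.
Qed.
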